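(* Let $p\in(1,\infty)$ and let $u\in C(Q_1)$ be a viscosity solution of $\mathcal{L}u-u_t=f$ in $U^+:=\{u>0\}$, where $f$ satisfies $0<c_0\le f\le c_1$. Then for every $(z,s)\in\overline{\{u>0\}}$ and $r>0$ with $Q_r(z,s)\subset Q_1$, $$\sup_{(x,t)\in\partial_pQ^-_r(z,s)}u(x,t)\ge\mu_0r^2+u(z,s),\qquad \mu_0=\min\Big(\frac{pc_0}{4(n+p-2)},\frac{c_0}{2}\Big).$$
   Context: $\mathcal{L}v=\frac1p\Delta v+\frac{p-2}{p}\langle D^2v\frac{\nabla v}{|\nabla v|},\frac{\nabla v}{|\nabla v|}\rangle$; viscosity solutions are defined via $C^2$ test functions, using $\mathcal{L}\phi-\phi_t$ when $\nabla\phi\neq0$, and $\Delta\phi+(p-2)\lambda_{\max}(D^2\phi)-\phi_t$ (if $p\ge2$) or $\Delta\phi+(p-2)\lambda_{\min}(D^2\phi)-\phi_t$ (if $1<p<2$) when $\nabla\phi=0$. $Q_r(z,s)=B_r(z)\times(s-r^2,s+r^2)$, $Q_1=Q_1(0,0)$, $Q^-_r(z,s)=B_r(z)\times(s-r^2,s]$, and $\partial_p$ denotes the parabolic boundary (lateral boundary together with the bottom). *)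

(* Defs.v *)
From HB Require Import structures.
From mathcomp Require Import all_boot all_order all_algebra.
From mathcomp Require Import all_classical all_reals all_analysis.
Set Implicit Arguments. Unset Strict Implicit. Unset Printing Implicit Defensive.
Import Order.TTheory GRing.Theory Num.Theory.
Import numFieldNormedType.Exports.
Local Open Scope classical_set_scope.
Local Open Scope ring_scope.

Definition pt (R : realType) (n : nat) := ('rV[R]_n * R)%type.

(* Coordinate directions: Some i = e_i in space, None = time direction. *)
Definition dir (R : realType) (n : nat) (k : option 'I_n) : pt R n :=
  match k with Some i => (delta_mx 0 i, 0) | None => (0, 1) end.

Definition shift (R : realType) (n : nat) (P v : pt R n) (h : R) : pt R n :=
  (P.1 + h *: v.1, P.2 + h * v.2).

Definition pderiv (R : realType) (n : nat) (k : option 'I_n)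
  (phi : pt R n -> R) (P : pt R n) : R :=
  derive1 (fun h : R => phi (shift P (@dir R n k) h)) 0.

Definition pderivable (R : realType) (n : nat) (k : option 'I_n)
  (phi : pt R n -> R) (P : pt R n) : Prop :=
  derivable (fun h : R => phi (shift P (@dir R n k) h)) 0 1.

Definition C2_on (R : realType) (n : nat) (V : set (pt R n)) (phi : pt R n -> R) : Prop :=
  forall P, V P ->
    {for P, continuous phi} /\
    (forall k, pderivable k phi P /\ {for P, continuous (pderiv k phi)}) /\
    (forall k l, pderivable l (pderiv k phi) P /\
                 {for P, continuous (pderiv l (pderiv k phi))}).

Definition grad (R : realType) (n : nat) (phi : pt R n -> R) (P : pt R n) : 'rV[R]_n :=
  \row_i pderiv (Some i) phi P.

Definition hess (R : realType) (n : nat) (phi : pt R n -> R) (P : pt R n) : 'M[R]_n :=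
  \matrix_(i, j) pderiv (Some i) (pderiv (Some j) phi) P.

Definition dt (R : realType) (n : nat) (phi : pt R n -> R) (P : pt R n) : R :=
  pderiv None phi P.

Definition lap (R : realType) (n : nat) (phi : pt R n -> R) (P : pt R n) : R :=
  \tr (hess phi P).

Definition lambda_max (R : realType) (n : nat) (A : 'M[R]_n) : R :=
  sup [set a : R | eigenvalue A a].
Definition lambda_min (R : realType) (n : nat) (A : 'M[R]_n) : R :=
  inf [set a : R | eigenvalue A a].

(* normalized p-Laplacian  L phi = (1/p) Delta phi + (p-2)/p <D^2 phi g/|g|, g/|g|> *)
Definition Lop (R : realType) (n : nat) (p : R) (phi : pt R n -> R) (P : pt R n) : R :=
  let g := grad phi P in let H := hess phi P in
  p^-1 * lap phi P + (p - 2) / p * ((g *m H *m g^T) 0 0 / (g *m g^T) 0 0).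

(* upper / lower semicontinuous envelopes of L at vanishing gradient *)
Definition Lup (R : realType) (n : nat) (p : R) (phi : pt R n -> R) (P : pt R n) : R :=
  if 2 <= p then p^-1 * (lap phi P + (p - 2) * lambda_max (hess phi P))
  else p^-1 * (lap phi P + (p - 2) * lambda_min (hess phi P)).
Definition Llow (R : realType) (n : nat) (p : R) (phi : pt R n -> R) (P : pt R n) : R :=
  if 2 <= p then p^-1 * (lap phi P + (p - 2) * lambda_min (hess phi P))
  else p^-1 * (lap phi P + (p - 2) * lambda_max (hess phi P)).

Definition test_fun_at (R : realType) (n : nat) (phi : pt R n -> R) (P0 : pt R n) : Prop :=
  exists V : set (pt R n), open V /\ V P0 /\ C2_on V phi.

Definition visc_sub (R : realType) (n : nat) (p : R) (f : pt R n -> R)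
  (U : set (pt R n)) (u : pt R n -> R) : Prop :=
  forall P0, U P0 -> forall phi : pt R n -> R, test_fun_at phi P0 ->
    (\forall P \near P0, u P - phi P <= u P0 - phi P0) ->
    if grad phi P0 != 0 then f P0 <= Lop p phi P0 - dt phi P0
    else f P0 <= Lup p phi P0 - dt phi P0.

Definition visc_super (R : realType) (n : nat) (p : R) (f : pt R n -> R)
  (U : set (pt R n)) (u : pt R n -> R) : Prop :=
  forall P0, U P0 -> forall phi : pt R n -> R, test_fun_at phi P0 ->
    (\forall P \near P0, u P0 - phi P0 <= u P - phi P) ->
    if grad phi P0 != 0 then Lop p phi P0 - dt phi P0 <= f P0
    else Llow p phi P0 - dt phi P0 <= f P0.

Definition visc_sol (R : realType) (n : nat) (p : R) (f : pt R n -> R)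
  (U : set (pt R n)) (u : pt R n -> R) : Prop :=
  visc_sub p f U u /\ visc_super p f U u.

Definition eucl2 (R : realType) (n : nat) (x : 'rV[R]_n) : R := \sum_i (x 0 i) ^+ 2.

Definition Qcyl (R : realType) (n : nat) (z : 'rV[R]_n) (s r : R) : set (pt R n) :=
  [set P | eucl2 (P.1 - z) < r ^+ 2 /\ s - r ^+ 2 < P.2 < s + r ^+ 2].

Definition Q1 (R : realType) (n : nat) : set (pt R n) := Qcyl (0 : 'rV[R]_n) 0 1.

Definition pbdry_Qminus (R : realType) (n : nat) (z : 'rV[R]_n) (s r : R) : set (pt R n) :=
  [set P | (eucl2 (P.1 - z) = r ^+ 2 /\ s - r ^+ 2 <= P.2 <= s) \/
           (eucl2 (P.1 - z) <= r ^+ 2 /\ P.2 = s - r ^+ 2)].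

(* U^+ = {u > 0} (inside Q_1, the domain of u) *)
Definition Uplus (R : realType) (n : nat) (u : pt R n -> R) : set (pt R n) :=
  [set P | @Q1 R n P /\ 0 < u P].

(* Main.v *)
Require Import Defs.
From HB Require Import structures.
From mathcomp Require Import all_boot all_order all_algebra.
From mathcomp Require Import all_classical all_reals all_analysis.
Import Order.TTheory GRing.Theory Num.Theory.
Import numFieldNormedType.Exports.
Local Open Scope classical_set_scope.
Local Open Scope ring_scope.
From mathcomp Require Import ring lra.
Require Import Defs.
Import Order.TTheory GRing.Theory Num.Theory.
Import numFieldNormedType.Exports.

Lemma gen_derive (R : realType) (k0 k1 k2 a b c : R) :
  is_derive (0:R) 1 (fun h : R => k0 + k1 * h + k2 * (h * h) + a * expR (b + c * h))
    (k1 + a * (expR b * c)).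
Proof.
have Hg := is_deriveD (is_derive_cst b (0:R) 1) (is_deriveM (is_derive_cst c (0:R) 1) (is_derive_id (0:R) 1)).
have He := is_derive1_comp (is_derive_expR _) Hg.
have H := is_deriveD (is_deriveD (is_deriveD (is_derive_cst k0 (0:R) 1) (is_deriveM (is_derive_cst k1 (0:R) 1) (is_derive_id (0:R) 1)))
   (is_deriveM (is_derive_cst k2 (0:R) 1) (is_deriveM (is_derive_id (0:R) 1) (is_derive_id (0:R) 1))))
   (is_deriveM (is_derive_cst a (0:R) 1) He).
have E : (fun h : R => k0 + k1 * h + k2 * (h * h) + a * expR (b + c * h)) =
  (cst k0 + cst k1 * id + cst k2 * (id * id) + cst a * (expR \o (cst b + cst c * id))) by [].
rewrite E; apply: is_derive_eq H _.
rewrite /cst /=.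
rewrite /GRing.scale /=.
have -> : ((fun=> b) + (fun=> c) * id) (0:R) = b by rewrite /GRing.add /= /GRing.mul /=; ring.
have -> : (id * id) (0:R) = 0 by rewrite /GRing.mul /=; ring.
ring.
Qed.

Lemma cont_sum (T : topologicalType) (R : realType) (I : Type) (s : seq I) (f : I -> T -> R) x :
 (forall i, {for x, continuous (f i)}) -> {for x, continuous (fun y => \sum_(i <- s) f i y)}.
Proof.
move=> H; elim: s => [|a s IH].
  have -> : (fun y => \sum_(i <- [::]) f i y) = fun=> 0 by apply: funext => y; rewrite big_nil.
  exact: cst_continuous.
have -> : (fun y => \sum_(i <- a :: s) f i y) = fun y => f a y + \sum_(i <- s) f i y.
  by apply: funext => y; rewrite big_cons.
rewrite /prop_for /continuous_at; apply: cvgD; [exact: H | exact: IH].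
Qed.

Lemma cont_mul (T : topologicalType) (R : realType) (f g : T -> R) x :
  {for x, continuous f} -> {for x, continuous g} -> {for x, continuous (fun y => f y * g y)}.
Proof. move=> Hf Hg; exact: cvgM. Qed.

Lemma cont_add (T : topologicalType) (R : realType) (f g : T -> R) x :
  {for x, continuous f} -> {for x, continuous g} -> {for x, continuous (fun y => f y + g y)}.
Proof. move=> Hf Hg; exact: cvgD. Qed.

Lemma cont_opp (T : topologicalType) (R : realType) (f : T -> R) x :
  {for x, continuous f} -> {for x, continuous (fun y => - f y)}.
Proof. move=> Hf; exact: cvgN. Qed.

Lemma cont_cst (T : topologicalType) (R : realType) (k : R) (x : T) :
  {for x, continuous (fun _ : T => k)}.
Proof. exact: cst_continuous. Qed.

Lemma cont_exp (T : topologicalType) (R : realType) (f : T -> R) x :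
  {for x, continuous f} -> {for x, continuous (fun y => expR (f y))}.
Proof. move=> Hf; apply: (continuous_comp Hf); exact: continuous_expR. Qed.

Lemma cont_snd (R : realType) n (P : pt R n) : {for P, continuous (fun Q : pt R n => Q.2)}.
Proof. exact: cvg_snd. Qed.

Lemma cont_coord (R : realType) n (i : 'I_n) (P : pt R n) : {for P, continuous (fun Q : pt R n => Q.1 0 i)}.
Proof. apply: (continuous_comp (f := fst) (g := fun M : 'rV[R]_n => M 0 i)).
  exact: cvg_fst. exact: coord_continuous. Qed.

Lemma eucl2E (R : realType) n (x : 'rV[R]_n) : eucl2 x = \sum_i (x 0 i * x 0 i).
Proof. by rewrite /eucl2; apply: eq_bigr => i _; rewrite expr2. Qed.

Lemma cont_eucl2 (R : realType) n (c : 'rV[R]_n) (P : pt R n) :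
  {for P, continuous (fun Q : pt R n => eucl2 (Q.1 - c))}.
Proof.
have -> : (fun Q : pt R n => eucl2 (Q.1 - c)) =
   (fun Q => \sum_(i <- index_enum 'I_n) ((Q.1 0 i - c 0 i) * (Q.1 0 i - c 0 i))).
  apply: funext => Q; rewrite eucl2E; apply: eq_bigr => i _; by rewrite !mxE.
apply: cont_sum => i; apply: cont_mul; apply: cont_add; (try exact: cont_coord); exact: cont_cst.
Qed.

Lemma cont_eucl2_rV (R : realType) n (c : 'rV[R]_n) (x : 'rV[R]_n) :
  {for x, continuous (fun y : 'rV[R]_n => eucl2 (y - c))}.
Proof.
have -> : (fun y : 'rV[R]_n => eucl2 (y - c)) =
   (fun y => \sum_(i <- index_enum 'I_n) ((y 0 i - c 0 i) * (y 0 i - c 0 i))).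
  apply: funext => Q; rewrite eucl2E; apply: eq_bigr => i _; by rewrite !mxE.
apply: cont_sum => i; apply: cont_mul; apply: cont_add; (try exact: coord_continuous); exact: cont_cst.
Qed.

Lemma eucl2_shift (R : realType) n (x c : 'rV[R]_n) (i : 'I_n) (h : R) :
  eucl2 (x + h *: delta_mx 0 i - c) = eucl2 (x - c) + (2 * (x 0 i - c 0 i)) * h + h * h.
Proof.
rewrite !eucl2E (bigD1 i) //= [in RHS](bigD1 i) //= !mxE eqxx /=.
have -> : \sum_(j < n | j != i) ((x + h *: delta_mx 0 i - c) 0 j * (x + h *: delta_mx 0 i - c) 0 j)
   = \sum_(j < n | j != i) ((x - c) 0 j * (x - c) 0 j).
  apply: eq_bigr => j ji; rewrite !mxE /= (negbTE ji) /=. by rewrite mulr0 addr0.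
rewrite eqxx mulr1. ring.
Qed.

Section Phi.
Variables (R : realType) (n : nat) (c : 'rV[R]_n) (A mu sp eta b : R).

Definition phi (P : pt R n) : R :=
  A + mu * (eucl2 (P.1 - c) + sp - P.2) + eta * expR (b * (P.2 - sp)).

Lemma pd_gen (F : R -> R) k0 k1 k2 a bb cc :
  F = (fun h => k0 + k1 * h + k2 * (h * h) + a * expR (bb + cc * h)) ->
  derive1 F 0 = k1 + a * (expR bb * cc) /\ derivable F 0 1.
Proof.
move=> ->; have H := @gen_derive R k0 k1 k2 a bb cc; split.
  by rewrite derive1E; apply: derive_val.
exact: ex_derive.
Qed.

Lemma phi_sp_fun (P : pt R n) (i : 'I_n) :
  (fun h => phi (shift P (@dir R n (Some i)) h)) =
  (fun h => (A + mu * (eucl2 (P.1 - c) + sp - P.2)) + (mu * (2 * (P.1 0 i - c 0 i))) * h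
     + mu * (h * h) + eta * expR (b * (P.2 - sp) + 0 * h)).
Proof.
apply: funext => h; rewrite /phi /shift /dir /= eucl2_shift mulr0 addr0 mul0r addr0. ring.
Qed.

Lemma phi_t_fun (P : pt R n) :
  (fun h => phi (shift P (@dir R n None) h)) =
  (fun h => (A + mu * (eucl2 (P.1 - c) + sp - P.2)) + (- mu) * h
     + 0 * (h * h) + eta * expR (b * (P.2 - sp) + b * h)).
Proof.
apply: funext => h; rewrite /phi /shift /dir /= scaler0 addr0 mulr1.
have -> : b * (P.2 + h - sp) = b * (P.2 - sp) + b * h by ring.
ring.
Qed.

Definition d1sp (i : 'I_n) (Q : pt R n) : R := 2 * mu * (Q.1 0 i - c 0 i).
Definition d1t (Q : pt R n) : R := - mu + eta * b * expR (b * (Q.2 - sp)).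

Lemma pderiv_sp i : pderiv (Some i) phi = d1sp i.
Proof.
apply: funext => P; rewrite /pderiv (pd_gen _ _ _ _ _ _ _ (phi_sp_fun P i)).1 /d1sp. ring.
Qed.

Lemma pderiv_t : pderiv None phi = d1t.
Proof.
apply: funext => P; rewrite /pderiv (pd_gen _ _ _ _ _ _ _ (phi_t_fun P)).1 /d1t. ring.
Qed.

Lemma pderivable_phi k P : pderivable k phi P.
Proof.
case: k => [i|]; rewrite /pderivable.
  exact: (pd_gen _ _ _ _ _ _ _ (phi_sp_fun P i)).2.
exact: (pd_gen _ _ _ _ _ _ _ (phi_t_fun P)).2.
Qed.


Lemma d1sp_sp_fun i j (P : pt R n) :
  (fun h => d1sp j (shift P (@dir R n (Some i)) h)) =
  (fun h => 2 * mu * (P.1 0 j - c 0 j) + (2 * mu * (j == i)%:R) * h + 0 * (h * h)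
            + 0 * expR (0 + 0 * h)).
Proof. apply: funext => h; rewrite /d1sp /shift /dir /= !mxE /=. ring. Qed.

Lemma d1sp_t_fun j (P : pt R n) :
  (fun h => d1sp j (shift P (@dir R n None) h)) =
  (fun h => 2 * mu * (P.1 0 j - c 0 j) + 0 * h + 0 * (h * h) + 0 * expR (0 + 0 * h)).
Proof. apply: funext => h; rewrite /d1sp /shift /dir /= scaler0 addr0. ring. Qed.

Lemma d1t_sp_fun i (P : pt R n) :
  (fun h => d1t (shift P (@dir R n (Some i)) h)) =
  (fun h => d1t P + 0 * h + 0 * (h * h) + 0 * expR (0 + 0 * h)).
Proof. apply: funext => h; rewrite /d1t /shift /dir /= mulr0 addr0. ring. Qed.

Lemma d1t_t_fun (P : pt R n) :
  (fun h => d1t (shift P (@dir R n None) h)) =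
  (fun h => - mu + 0 * h + 0 * (h * h) + (eta * b) * expR (b * (P.2 - sp) + b * h)).
Proof.
apply: funext => h; rewrite /d1t /shift /dir /= mulr1.
have -> : b * (P.2 + h - sp) = b * (P.2 - sp) + b * h by ring.
ring.
Qed.

Lemma pd_sp_sp i j : pderiv (Some i) (d1sp j) = fun _ => 2 * mu * (j == i)%:R.
Proof. apply: funext => P; rewrite /pderiv (pd_gen _ _ _ _ _ _ _ (d1sp_sp_fun i j P)).1. ring. Qed.
Lemma pd_t_sp j : pderiv None (d1sp j) = fun _ => 0.
Proof. apply: funext => P; rewrite /pderiv (pd_gen _ _ _ _ _ _ _ (d1sp_t_fun j P)).1. ring. Qed.
Lemma pd_sp_t i : pderiv (Some i) d1t = fun _ => 0.
Proof. apply: funext => P; rewrite /pderiv (pd_gen _ _ _ _ _ _ _ (d1t_sp_fun i P)).1. ring. Qed.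
Lemma pd_t_t : pderiv None d1t = fun Q => eta * b * (expR (b * (Q.2 - sp)) * b).
Proof. apply: funext => P; rewrite /pderiv (pd_gen _ _ _ _ _ _ _ (d1t_t_fun P)).1. ring. Qed.

Lemma cont_phi P : {for P, continuous phi}.
Proof.
rewrite /phi; apply: cont_add; apply: cont_add || apply: cont_mul.
- exact: cont_cst.
- apply: cont_mul; first exact: cont_cst.
  apply: cont_add; [apply: cont_add; [exact: cont_eucl2|exact: cont_cst]|apply: cont_opp; exact: cont_snd].
- exact: cont_cst.
- apply: cont_exp; apply: cont_mul; first exact: cont_cst.
  apply: cont_add; [exact: cont_snd|exact: cont_cst].
Qed.

Lemma C2_phi : C2_on setT phi.
Proof.
move=> P _; split; first exact: cont_phi.
split.
  move=> k; split; first exact: pderivable_phi.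
  case: k => [i|].
    rewrite pderiv_sp /d1sp; apply: cont_mul; first exact: cont_cst.
    apply: cont_add; [exact: cont_coord|exact: cont_cst].
  rewrite pderiv_t /d1t; apply: cont_add; first exact: cont_cst.
  apply: cont_mul; first exact: cont_cst.
  apply: cont_exp; apply: cont_mul; first exact: cont_cst.
  apply: cont_add; [exact: cont_snd|exact: cont_cst].
move=> k l; case: k => [j|]; case: l => [i|].
- rewrite pderiv_sp pd_sp_sp; split; last exact: cont_cst.
  exact: (pd_gen _ _ _ _ _ _ _ (d1sp_sp_fun i j P)).2.
- rewrite pderiv_sp pd_t_sp; split; last exact: cont_cst.
  exact: (pd_gen _ _ _ _ _ _ _ (d1sp_t_fun j P)).2.
- rewrite pderiv_t pd_sp_t; split; last exact: cont_cst.
  exact: (pd_gen _ _ _ _ _ _ _ (d1t_sp_fun i P)).2.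
- rewrite pderiv_t pd_t_t; split; first exact: (pd_gen _ _ _ _ _ _ _ (d1t_t_fun P)).2.
  apply: cont_mul; first exact: cont_cst.
  apply: cont_mul; last exact: cont_cst.
  apply: cont_exp; apply: cont_mul; first exact: cont_cst.
  apply: cont_add; [exact: cont_snd|exact: cont_cst].
Qed.

Lemma grad_phi P : grad phi P = 2 * mu *: (P.1 - c).
Proof. apply/rowP => i; by rewrite /grad !mxE pderiv_sp /d1sp. Qed.

Lemma hess_phi P : hess phi P = (2 * mu)%:M.
Proof.
apply/matrixP => i j; rewrite /hess !mxE pderiv_sp pd_sp_sp eq_sym.
by case: (i == j); rewrite ?mulr1 ?mulr0.
Qed.

Lemma dt_phi P : dt phi P = - mu + eta * b * expR (b * (P.2 - sp)).
Proof. by rewrite /dt pderiv_t. Qed.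

End Phi.

Section LA.
Variables (R : realType) (n : nat).

Lemma eig_scalar (a x : R) : (0 < n)%N -> eigenvalue (a%:M : 'M[R]_n) x <-> x = a.
Proof.
move=> n0; split.
  move/eigenvalueP => [v]; rewrite mul_mx_scalar => /eqP; rewrite -subr_eq0 -scalerBl.
  rewrite scaler_eq0 => /orP [|/eqP->]; last by rewrite eqxx.
  by rewrite subr_eq0 => /eqP -> .
move=> ->; apply/eigenvalueP; exists (delta_mx 0 (Ordinal n0)); first by rewrite mul_mx_scalar.
apply/eqP => /matrixP /(_ 0 (Ordinal n0)); rewrite !mxE !eqxx /= => /eqP.
by rewrite oner_eq0.
Qed.

Lemma eigset_scalar (a : R) : (0 < n)%N -> [set x : R | eigenvalue (a%:M : 'M[R]_n) x] = [set a].
Proof. by move=> n0; apply/seteqP; split => x /=; rewrite eig_scalar. Qed.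

Lemma lmax_scalar (a : R) : (0 < n)%N -> lambda_max (a%:M : 'M[R]_n) = a.
Proof. by move=> n0; rewrite /lambda_max eigset_scalar // sup1. Qed.

Lemma lmin_scalar (a : R) : (0 < n)%N -> lambda_min (a%:M : 'M[R]_n) = a.
Proof. by move=> n0; rewrite /lambda_min eigset_scalar // inf1. Qed.

Lemma Lup_val (p : R) (phi : pt R n -> R) P (a : R) : (0 < n)%N -> hess phi P = a%:M ->
  Lup p phi P = p^-1 * (a * n%:R + (p - 2) * a).
Proof.
move=> n0 H; rewrite /Lup /lap H mxtrace_scalar lmax_scalar // lmin_scalar //.
by case: ifP => _; rewrite mulr_natr.
Qed.

Lemma ggT_neq0 (g : 'rV[R]_n) : g != 0 -> (g *m g^T) 0 0 != 0.
Proof.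
move=> g0; rewrite !mxE; apply/eqP => /eqP; rewrite psumr_eq0; last first.
  by move=> i _; rewrite mxE -expr2 sqr_ge0.
move=> /allP Hall; move: g0; apply/negP; rewrite negbK; apply/eqP/rowP => i.
have := Hall i (mem_index_enum i); rewrite /= !mxE -expr2 sqrf_eq0 => /eqP ->.
by [].
Qed.

Lemma Lop_val (p : R) (phi : pt R n -> R) P (a : R) : hess phi P = a%:M -> grad phi P != 0 ->
  Lop p phi P = p^-1 * (a * n%:R + (p - 2) * a).
Proof.
move=> H g0; rewrite /Lop /lap H mxtrace_scalar mul_mx_scalar -scalemxAl mxE.
rewrite mulrK; last by rewrite unitfE ggT_neq0.
rewrite mulr_natr. ring. Qed.
End LA.

Lemma strip_bound (R : realType) n (u : pt R n -> R) (S : set 'rV[R]_n) (s M : R) :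
  compact S -> (forall x, S x -> {for (x, s), continuous u}) -> (forall x, S x -> u (x, s) < M) ->
  exists2 d, 0 < d & forall x t, S x -> s <= t <= s + d -> u (x, t) < M.
Proof.
move=> cS cu uM.
have := (compact_near_coveringP S).1 cS R (0:R)^'+ (fun d x => forall t, s <= t <= s + d -> u (x,t) < M) _.
move=> H.
have : \forall d \near (0:R)^'+, S `<=` (fun x => forall t, s <= t <= s + d -> u (x,t) < M).
  apply: H => x Sx.
  have Hn : \forall Q \near (x, s), u Q < M := cvgr_lt _ (cu x Sx) _ (uM x Sx).
  case: Hn => [[A1 A2] /= [nA1 nA2] sub].
  move/nbhs_ballP: nA2 => [e e0 be].
  exists (A1, [set d : R | 0 < d < e]) => /=.
    split => //. near=> d. apply/andP; split. near: d. exact: nbhs_right_gt. near: d. exact: nbhs_right_lt.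
  move=> [x' d] /= [A1x /andP [d0 de]] t /andP [st tsd].
  have : (A1 `*` A2) (x', t). split => //=. apply: be. rewrite /ball /= ler0_norm; lra.
  exact: sub.
Unshelve. all: end_near.
move=> Hd.
have : \forall d \near (0:R)^'+, 0 < d /\ S `<=` (fun x => forall t, s <= t <= s + d -> u (x,t) < M).
  near=> d; split; [near: d; exact: nbhs_right_gt|near: d; exact: Hd].
move=> /filter_ex [d [d0 Hd']]. exists d => // x t Sx Ht. exact: Hd'.
Unshelve. all: end_near.
Qed.

Section Cpt.
Variables (R : realType) (n : nat).

Lemma coord_bound (x z : 'rV[R]_n) (r : R) (i : 'I_n) : 0 < r -> eucl2 (x - z) <= r ^+ 2 ->
  z 0 i - r <= x 0 i <= z 0 i + r.
Proof.
move=> r0; rewrite eucl2E (bigD1 i) //= => H.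
have H1 : 0 <= \sum_(j < n | j != i) ((x - z) 0 j * (x - z) 0 j).
  by apply: sumr_ge0 => j _; rewrite -expr2 sqr_ge0.
move: H; rewrite !mxE => H.
apply/andP; split; nra.
Qed.

Lemma ball_closed (z : 'rV[R]_n) (r : R) : closed [set x : 'rV[R]_n | eucl2 (x - z) <= r ^+ 2].
Proof.
have -> : [set x : 'rV[R]_n | eucl2 (x - z) <= r ^+ 2] =
  (fun x => eucl2 (x - z)) @^-1` `[0, r ^+ 2].
  apply/seteqP; split => x /=; rewrite in_itv /=.
    move=> ->; rewrite andbT /eucl2; apply: sumr_ge0 => i _; exact: sqr_ge0.
  by case/andP.
apply: (preimage_closed (D := `[0, r ^+ 2]%classic)); last exact: itv_closed.
move=> x _; exact: cont_eucl2_rV.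
Qed.

Lemma sphere_closed (z : 'rV[R]_n) (r : R) : closed [set x : 'rV[R]_n | eucl2 (x - z) = r ^+ 2].
Proof.
have -> : [set x : 'rV[R]_n | eucl2 (x - z) = r ^+ 2] =
  (fun x => eucl2 (x - z)) @^-1` `[r ^+ 2, r ^+ 2].
  apply/seteqP; split => x /=; rewrite in_itv /=.
    by move=> ->; rewrite lexx.
  by move=> H; apply/eqP; rewrite eq_le andbC.
apply: (preimage_closed (D := `[r ^+ 2, r ^+ 2]%classic)); last exact: itv_closed.
move=> x _; exact: cont_eucl2_rV.
Qed.

Lemma box_compact (z : 'rV[R]_n) (r : R) :
  compact [set v : 'rV[R]_n | forall i, `[z 0 i - r, z 0 i + r]%classic (v ord0 i)].
Proof. apply: (@rV_compact _ _ (fun i => `[z 0 i - r, z 0 i + r]%classic)) => i; exact: segment_compact. Qed.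

Lemma ball_compact (z : 'rV[R]_n) (r : R) : 0 < r -> compact [set x : 'rV[R]_n | eucl2 (x - z) <= r ^+ 2].
Proof.
move=> r0; apply: subclosed_compact (ball_closed z r) (box_compact z r) _.
move=> x /= H i; rewrite /= in_itv /=; exact: coord_bound.
Qed.

Lemma sphere_compact (z : 'rV[R]_n) (r : R) : 0 < r -> compact [set x : 'rV[R]_n | eucl2 (x - z) = r ^+ 2].
Proof.
move=> r0; apply: subclosed_compact (sphere_closed z r) (box_compact z r) _.
move=> x /= H i; rewrite /= in_itv /=; apply: coord_bound => //; by rewrite H.
Qed.

Definition Dset (z : 'rV[R]_n) (r lo hi : R) : set (pt R n) :=
  [set x : 'rV[R]_n | eucl2 (x - z) <= r ^+ 2] `*` `[lo, hi]%classic.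

Lemma D_compact z r lo hi : 0 < r -> compact (Dset z r lo hi).
Proof. move=> r0; apply: compact_setX; [exact: ball_compact|exact: segment_compact]. Qed.

Lemma D_closed z r lo hi : closed (Dset z r lo hi).
Proof.
have -> : Dset z r lo hi = (fst @^-1` [set x : 'rV[R]_n | eucl2 (x - z) <= r ^+ 2]) `&`
   (snd @^-1` `[lo, hi]%classic) by [].
apply: closedI; apply: preimage_closed.
- move=> P _; exact: cvg_fst.
- exact: ball_closed.
- move=> P _; exact: cvg_snd.
- exact: itv_closed.
Qed.

Lemma K_compact (D : set (pt R n)) (u : pt R n -> R) : compact D -> closed D ->
  (forall P, D P -> {for P, continuous u}) -> compact (D `&` [set P | 0 <= u P]).
Proof.
move=> cD clD cu; apply: subclosed_compact cD _; last by move=> P [].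
move=> P clP.
have DP : D P by apply: clD; apply: closure_subset clP => Q [].
split => //; rewrite /=; rewrite leNgt; apply/negP => uP.
have Hn : \forall Q \near P, u Q < 0 by apply: (cvgr_lt _ (cu P DP) _ uP).
have [Q [[_ uQ] uQ']] := clP _ Hn.
move: uQ uQ'; rewrite /=. lra.
Qed.

End Cpt.

Section H.
Variables (R : realType) (n : nat).

Lemma eucl2_ge0 (x : 'rV[R]_n) : 0 <= eucl2 x.
Proof. by rewrite /eucl2; apply: sumr_ge0 => i _; exact: sqr_ge0. Qed.

Lemma eucl2_subrr (x : 'rV[R]_n) : eucl2 (x - x) = 0.
Proof. by rewrite subrr /eucl2; apply: big1 => i _; rewrite mxE expr0n. Qed.

Lemma eucl2_lower (a b : 'rV[R]_n) (lam : R) : 0 < lam ->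
  (1 - lam) * eucl2 a - lam^-1 * eucl2 b <= eucl2 (a - b).
Proof.
move=> l0; rewrite !eucl2E mulr_sumr mulr_sumr -sumrB; apply: ler_sum => i _.
rewrite !mxE.
set x := a 0 i; set y := b 0 i.
have li : lam * lam^-1 = 1 by rewrite mulfV // gt_eqF.
have lip : 0 < lam^-1 by rewrite invr_gt0.
have H : 0 <= (lam * x - y) * (lam * x - y) by rewrite -expr2 sqr_ge0.
have H2 : 0 <= lam^-1 * ((lam * x - y) * (lam * x - y)) by rewrite mulr_ge0 // ltW.
have E : lam^-1 * ((lam * x - y) * (lam * x - y)) = lam * x * x - 2 * x * y + lam^-1 * y * y.
  have -> : lam^-1 * ((lam * x - y) * (lam * x - y)) = (lam * lam^-1) * lam * x * x - 2 * (lam * lam^-1) * x * y + lam^-1 * y * y by ring.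
  by rewrite li; ring.
nra.
Qed.


Lemma ex_min2 (a b : R) : 0 < a -> 0 < b -> exists e : R, [/\ 0 < e, e <= a & e <= b].
Proof.
move=> a0 b0; exists (Num.min a b); split.
- by rewrite lt_min a0 b0.
- by rewrite ge_min lexx.
- by rewrite ge_min lexx orbT.
Qed.

Lemma min_le (a b : R) : Num.min a b <= a /\ Num.min a b <= b.
Proof. by split; rewrite ge_min lexx ?orbT. Qed.

Lemma expR_lb (x : R) : 1 + x <= expR x.
Proof. exact: expR_ge1Dx. Qed.

End H.

Lemma core (R : realType) (n : nat) (p c0 c1 : R) (f u : pt R n -> R) (z : 'rV[R]_n) (s r : R)
 (mu eps M' u0 d0 lam : R) (z' : 'rV[R]_n) (s' : R) :
 (0 < n)%N -> 1 < p ->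
 (forall P, @Q1 R n P -> {for P, continuous u}) ->
 (forall P, Uplus u P -> c0 <= f P <= c1) ->
 visc_sub p f (Uplus u) u ->
 0 < r -> 0 < eps -> 0 < mu -> 0 < lam -> 0 < d0 ->
 mu * (2 * (n%:R + p - 2) / p + 1) < c0 ->
 (forall T, T < 1 -> @Dset R n z r (s - r ^+ 2) T `<=` @Q1 R n) ->
 (forall P, pbdry_Qminus z s r P -> u P <= M') ->
 (forall x t, eucl2 (x - z) = r ^+ 2 -> s <= t <= s + d0 -> u (x, t) < M' + eps / 4) ->
 M' = mu * r ^+ 2 + u0 - 3 * eps / 4 ->
 s + d0 < 1 ->
 mu * d0 <= eps / 8 ->
 mu * lam * r ^+ 2 = eps / 16 ->
 Uplus u (z', s') ->
 u0 - eps / 16 < u (z', s') ->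
 eucl2 (z' - z) <= r ^+ 2 ->
 mu * (lam^-1 * eucl2 (z' - z)) <= eps / 16 ->
 s - r ^+ 2 <= s' -> s' <= s + d0 / 2 -> mu * (s - s') <= eps / 16 ->
 False.
Proof.
move=> n0 p1 ucont fb vsub r0 eps0 mu0 lam0 d00 muK Dsub HB Hstrip EM' sd0 mud0 mulam
  UP' Hu' Hz' Hzl Hs'lo Hs'hi Hs'm.
have uP0 : 0 < u (z', s') by case: UP'.
set uP := u (z', s') in uP0 Hu'.
have [kappa [ka0 kaa kab]] := @ex_min2 R (uP / 2) (eps / 16) ltac:(clear -uP0; lra) ltac:(clear -eps0; lra).
set A := uP - kappa.
have [tau [tau0 taua taub]] := @ex_min2 R (d0 / 2) (uP / (4 * mu)) ltac:(clear -d00; lra)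
  ltac:(apply: divr_gt0; clear -uP0 mu0; lra).
have mutau : mu * tau <= uP / 4.
  have : mu * tau <= mu * (uP / (4 * mu)) by apply: ler_wpM2l => //; exact: ltW.
  have -> : mu * (uP / (4 * mu)) = uP / 4 by field; clear -mu0; lra.
  by [].
have mutau2 : mu * tau <= eps / 16.
  have : mu * tau <= mu * (d0 / 2) by apply: ler_wpM2l => //; exact: ltW.
  clear -mud0; lra.
set T := s' + tau.
have T1 : T < 1 by rewrite /T; clear -taua Hs'hi sd0; lra.
set D := @Dset R n z r (s - r ^+ 2) T.
have DQ : D `<=` @Q1 R n := Dsub T T1.
have P'D : D (z', s').
  split => //=; rewrite in_itv /=; apply/andP; split => //; rewrite /T; clear -tau0; lra.
have cD : compact D by exact: D_compact.
have clD : closed D by exact: D_closed.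
have [Pm PmD HPm] : exists2 Pm, Pm \in D & forall P, P \in D -> u P <= u Pm.
  apply: compact_EVT_max => //; first by exists (z', s').
  apply: continuous_in_subspaceT => P /set_mem DP; apply: ucont; exact: DQ.
set Umax := u Pm.
set eta := kappa / 2.
set Big := `|Umax| + `|A| + mu * tau + 1.
have Big0 : 0 < Big by rewrite /Big; have := normr_ge0 Umax; have := normr_ge0 A; clear -mu0 tau0; nra.
set beta := Big / (eta * tau).
have ebt : eta * (beta * tau) = Big by rewrite /beta /eta; field; apply/andP; split; clear -ka0 tau0; lra.
set ph := @phi R n z' A mu s' eta beta.
have phE : forall P, ph P = A + mu * (eucl2 (P.1 - z') + s' - P.2) + eta * expR (beta * (P.2 - s')) by [].
have eta0 : 0 < eta by rewrite /eta; clear -ka0; lra.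
have phP' : ph (z', s') = A + eta by rewrite phE /= eucl2_subrr subrr mulr0 expR0 mulr1; ring.
have Dt : forall P, D P -> [/\ eucl2 (P.1 - z) <= r ^+ 2, s - r ^+ 2 <= P.2 & P.2 <= T].
  by move=> [x t] [/= Hx]; rewrite /= in_itv /= => /andP [H1 H2].
have Apos : A - mu * tau > 0 by rewrite /A; clear -kaa mutau uP0; lra.
have phlow : forall P, D P -> A - mu * tau <= ph P.
  move=> P /Dt [_ _ HT]; rewrite phE.
  have e1 := @eucl2_ge0 R n (P.1 - z').
  have e2 : 0 <= eta * expR (beta * (P.2 - s')) by apply: mulr_ge0; [exact: ltW|exact: expR_ge0].
  have e3 : mu * P.2 <= mu * T by apply: ler_wpM2l => //; exact: ltW.
  have e4 : 0 <= mu * eucl2 (P.1 - z') by apply: mulr_ge0 => //; exact: ltW.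
  move: e3; rewrite /T; clear -e1 e2 e4; nra.
have Alow : A >= u0 - eps / 8 by rewrite /A; clear -kab Hu'; lra.
have lateral : forall P, D P -> eucl2 (P.1 - z) = r ^+ 2 -> u P < ph P.
  move=> [x t] DP Hx; have [_ Hlo HT] := Dt _ DP; rewrite /= in Hx Hlo HT.
  have uB : u (x, t) < M' + eps / 4.
    case: (lerP t s) => Hts.
      have : u (x, t) <= M' by apply: HB; left; split => //=; apply/andP; split.
      clear -eps0; lra.
    apply: Hstrip => //; apply/andP; split; [exact: ltW|]; move: HT; rewrite /T.
    clear -Hs'hi taua; lra.
  have Hl := @eucl2_lower R n (x - z) (z' - z) lam lam0.
  rewrite (_ : x - z - (z' - z) = x - z') in Hl; last by rewrite opprB addrA subrK.
  rewrite Hx in Hl.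
  have Hm : mu * ((1 - lam) * r ^+ 2 - lam^-1 * eucl2 (z' - z)) <= mu * eucl2 (x - z') by apply: ler_wpM2l => //; exact: ltW.
  have e2 : 0 <= eta * expR (beta * (t - s')) by apply: mulr_ge0; [exact: ltW|exact: expR_ge0].
  have e3 : mu * t <= mu * T by apply: ler_wpM2l => //; exact: ltW.
  rewrite phE /=; move: e3; rewrite /T EM' in uB *.
  clear -Hm e2 uB Alow mulam Hzl mutau2 eps0; nra.
have bottom : forall P, D P -> P.2 = s - r ^+ 2 -> u P < ph P.
  move=> [x t] DP Ht; have [Hx _ _] := Dt _ DP; rewrite /= in Hx Ht; subst t.
  have uB : u (x, s - r ^+ 2) <= M' by apply: HB; right; split.
  have e1 := @eucl2_ge0 R n (x - z').
  have e4 : 0 <= mu * eucl2 (x - z') by apply: mulr_ge0 => //; exact: ltW.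
  have e2 : 0 <= eta * expR (beta * (s - r ^+ 2 - s')) by apply: mulr_ge0; [exact: ltW|exact: expR_ge0].
  rewrite phE /=; rewrite EM' in uB.
  clear -e4 e2 uB Alow Hs'm eps0; nra.
have top : forall P, D P -> P.2 = T -> u P < ph P.
  move=> [x t] DP Ht; rewrite /= in Ht; subst t.
  have uB : u (x, T) <= Umax by apply: HPm; exact: mem_set.
  have e4 : 0 <= mu * eucl2 (x - z') by apply: mulr_ge0 => //; [exact: ltW|exact: eucl2_ge0].
  have ex1 : 1 + beta * tau <= expR (beta * tau) := @expR_lb R _.
  have e5 : eta * (1 + beta * tau) <= eta * expR (beta * tau) by apply: ler_wpM2l => //; exact: ltW.
  have nU := ler_norm Umax; have nA : - A <= `|A| by rewrite -normrN ler_norm.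
  rewrite phE /=; rewrite /T in uB *.
  have -> : s' + tau - s' = tau by ring.
  move: ebt; rewrite /Big => ebt.
  clear -e4 e5 uB ebt nU nA eta0; nra.
set K := D `&` [set P | 0 <= u P].
have cK : compact K.
  apply: K_compact => // P DP; apply: ucont; exact: DQ.
have [P0 P0K HP0] : exists2 P0, P0 \in K & forall P, P \in K -> u P - ph P <= u P0 - ph P0.
  apply: (@compact_EVT_max _ _ (fun P => u P - ph P)) => //.
    by exists (z', s'); split => //=; exact: ltW.
  apply: continuous_in_subspaceT => P /set_mem [DP _].
  apply: cvgB; [apply: ucont; exact: DQ|exact: cont_phi].
move/set_mem: P0K => [DP0 uP00]; rewrite /= in uP00.
have gap : u (z', s') - ph (z', s') <= u P0 - ph P0.
  by apply: HP0; apply/mem_set; split => //=; exact: ltW.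
rewrite phP' -/uP in gap.
have phP0 := phlow _ DP0.
have uP0pos : 0 < u P0 by rewrite /A /eta in gap phP0 Apos; clear -gap phP0 Apos ka0; lra.
have [H1 H2 H3] := Dt _ DP0.
have H1' : eucl2 (P0.1 - z) < r ^+ 2.
  rewrite lt_neqAle H1 andbT; apply/negP => /eqP He.
  have := lateral _ DP0 He; rewrite /A /eta in gap; clear -gap ka0; lra.
have H2' : s - r ^+ 2 < P0.2.
  rewrite lt_neqAle H2 andbT; apply/negP => /eqP He.
  have := bottom _ DP0 (esym He); rewrite /A /eta in gap; clear -gap ka0; lra.
have H3' : P0.2 < T.
  rewrite lt_neqAle H3 andbT; apply/negP => /eqP He.
  have := top _ DP0 He; rewrite /A /eta in gap; clear -gap ka0; lra.
have UP0 : Uplus u P0 by split => //; exact: DQ.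
have Hloc : \forall P \near P0, u P - ph P <= u P0 - ph P0.
  have c1' : {for P0, continuous u} by apply: ucont; exact: DQ.
  near=> P; apply: HP0; apply/mem_set; split; [split|]; rewrite /=.
  - apply: ltW; near: P. exact: (cvgr_lt _ (@cont_eucl2 R n z P0) _ H1').
  - rewrite in_itv /=; apply/andP; split; apply: ltW; near: P.
      exact: (cvgr_gt _ (@cont_snd R n P0) _ H2').
    exact: (cvgr_lt _ (@cont_snd R n P0) _ H3').
  - apply: ltW; near: P. exact: (cvgr_gt _ c1' _ uP0pos).
have tf : test_fun_at ph P0.
  exists setT; split; [exact: openT|split => //]; exact: C2_phi.
have := vsub P0 UP0 ph tf Hloc.
have fP0 := fb P0 UP0.
have hP := @hess_phi R n z' A mu s' eta beta P0.
rewrite -/ph in hP.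
have Lv : (if grad ph P0 != 0 then Lop p ph P0 else Lup p ph P0) = p^-1 * (2 * mu * n%:R + (p - 2) * (2 * mu)).
  case: ifP => Hg; [exact: Lop_val|exact: Lup_val].
have dtv : dt ph P0 = - mu + eta * beta * expR (beta * (P0.2 - s')) by exact: dt_phi.
have e6 : 0 <= eta * beta * expR (beta * (P0.2 - s')).
  apply: mulr_ge0; last exact: expR_ge0. apply: mulr_ge0; [exact: ltW|].
  rewrite /beta; apply: divr_ge0; [exact: ltW|apply: mulr_ge0; exact: ltW].
have Kv : p^-1 * (2 * mu * n%:R + (p - 2) * (2 * mu)) + mu = mu * (2 * (n%:R + p - 2) / p + 1) by ring.
case: ifP Lv => Hg Lv; rewrite Lv dtv => Hf; move: fP0 => /andP [fP0 _]; clear -Hf Kv e6 muK fP0; lra.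
Unshelve. all: end_near.
Qed.

Theorem lemma4p1 (R : realType) (n : nat) (p c0 c1 : R) (f u : pt R n -> R) :
  (0 < n)%N -> 1 < p -> 0 < c0 ->
  (forall P, @Q1 R n P -> {for P, continuous u}) ->
  (forall P, Uplus u P -> c0 <= f P <= c1) ->
  visc_sol p f (Uplus u) u ->
  forall (z : 'rV[R]_n) (s r : R),
    closure (Uplus u) (z, s) -> 0 < r ->
    Qcyl z s r `<=` @Q1 R n ->
    pbdry_Qminus z s r `<=` @Q1 R n ->
    ((Num.min (p * c0 / (4 * (n%:R + p - 2))) (c0 / 2) * r ^+ 2 + u (z, s))%:E
      <= ereal_sup [set (u P)%:E | P in pbdry_Qminus z s r])%E.
Proof.
move=> n0 p1 c00 ucont fb [vsub _] z s r clz r0 QQ BQ.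
have n1 : 1 <= (n%:R : R) by rewrite ler1n.
have a0 : 0 < (n%:R + p - 2 : R) by lra.
set mu0 := Num.min _ _.
have [mu0a mu0b] := @min_le R (p * c0 / (4 * (n%:R + p - 2))) (c0 / 2).
rewrite -/mu0 in mu0a mu0b.
have mu0pos : 0 < mu0 by rewrite lt_min; apply/andP; split; [apply: divr_gt0; nra|lra].
set Kc := 2 * (n%:R + p - 2) / p + 1.
have Kc0 : 0 < Kc.
  have : 0 < 2 * (n%:R + p - 2) / p by apply: divr_gt0; lra.
  rewrite /Kc; lra.
have mu0K : mu0 * Kc <= c0.
  have E : p * c0 / (4 * (n%:R + p - 2)) * (2 * (n%:R + p - 2) / p) = c0 / 2.
    by field; apply/andP; split; lra.
  have H1 : mu0 * (2 * (n%:R + p - 2) / p) <= c0 / 2.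
    by rewrite -E; apply: ler_wpM2r => //; apply: divr_ge0; lra.
  rewrite /Kc; lra.
set u0 := u (z, s).
set B := pbdry_Qminus z s r.
rewrite leNgt; apply/negP => Hlt.
have [M [HM HMlt]] : exists M, (forall P, B P -> u P <= M) /\ M < mu0 * r ^+ 2 + u0.
  have ub P : B P -> ((u P)%:E <= ereal_sup [set (u P)%:E | P in B])%E.
    by move=> BP; apply: ereal_sup_ubound; exists P.
  move: Hlt ub; case: (ereal_sup _) => [m| |] Hlt ub.
  - exists m; split; last by rewrite lte_fin in Hlt.
    by move=> P BP; have := ub P BP; rewrite lee_fin.
  - by [].
  - exists (mu0 * r ^+ 2 + u0 - 1); split; last lra.
    by move=> P BP; have := ub P BP.
have [eps [eps0 epsa epsb]] := @ex_min2 R (mu0 * r ^+ 2 + u0 - M) (mu0 * r ^+ 2) ltac:(lra)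
   ltac:(apply: mulr_gt0 => //; exact: exprn_gt0).
set M' := mu0 * r ^+ 2 + u0 - eps.
have HB' : forall P, B P -> u P <= M' by move=> P BP; have := HM P BP; rewrite /M'; lra.
have r2 : 0 < r ^+ 2 by exact: exprn_gt0.
set mu := mu0 - eps / (4 * r ^+ 2).
have mur : mu * r ^+ 2 = mu0 * r ^+ 2 - eps / 4 by rewrite /mu; field; lra.
have mupos : 0 < mu.
  have : 0 < mu * r ^+ 2 by rewrite mur; lra.
  by rewrite pmulr_lgt0.
have mulm : mu < mu0.
  have : 0 < eps / (4 * r ^+ 2) by apply: divr_gt0; lra.
  rewrite /mu; lra.
have Q1E : forall P : pt R n, Q1 P -> eucl2 (P.1 - 0) < 1 /\ -1 < P.2 < 1.
  move=> P; rewrite /Q1 /Qcyl /= expr1n => -[H1 /andP [H2 H3]]; split => //; apply/andP; split; lra.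
have e0 : eucl2 (z - z) = 0 by exact: eucl2_subrr.
have Hzs : Q1 (z, s).
  apply: QQ; rewrite /Qcyl /= e0; split => //; apply/andP; split; lra.
have Hs1 : s < 1 by have [_ /andP [_ ?]] := Q1E _ Hzs.
have Hlo : -1 < s - r ^+ 2.
  have : Q1 (z, s - r ^+ 2) by apply: BQ; right; rewrite /= e0; split => //; exact: ltW.
  by move=> /Q1E [_ /andP [? _]].
have Hsp : forall x, eucl2 (x - z) <= r ^+ 2 -> eucl2 (x - 0) < 1.
  move=> x; rewrite le_eqVlt => /orP [/eqP H|H].
  - have : Q1 (x, s) by apply: BQ; left; split => //=; apply/andP; split; lra.
    by move=> /Q1E [].
  - have : Q1 (x, s) by apply: QQ; split => //=; apply/andP; split; lra.
    by move=> /Q1E [].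
have Dsub : forall T, T < 1 -> @Dset R n z r (s - r ^+ 2) T `<=` @Q1 R n.
  move=> T T1 [x t] [/= Hx]; rewrite /= in_itv /= => /andP [H1 H2].
  rewrite /Q1 /Qcyl /= expr1n; split; first exact: Hsp.
  apply/andP; split; lra.
have [d0 d00 Hd0] : exists2 d, 0 < d & forall x t, eucl2 (x - z) = r ^+ 2 -> s <= t <= s + d ->
    u (x, t) < M' + eps / 4.
  apply: (@strip_bound R n u [set x | eucl2 (x - z) = r ^+ 2] s (M' + eps / 4)).
  - exact: sphere_compact.
  - move=> x /= Hx; apply: ucont; apply: BQ; left; split => //=; apply/andP; split; lra.
  - move=> x /= Hx; have : u (x, s) <= M'.
      by apply: HB'; left; split => //=; apply/andP; split; lra.
    lra.
have [d1 [d10 d1a d1b]] := @ex_min2 R d0 ((1 - s) / 2) d00 ltac:(lra).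
have [dl [dl0 dla dlb]] := @ex_min2 R d1 (eps / (8 * mu)) d10 ltac:(apply: divr_gt0; lra).
have mudl : mu * dl <= eps / 8.
  have : mu * dl <= mu * (eps / (8 * mu)) by apply: ler_wpM2l; lra.
  have -> : mu * (eps / (8 * mu)) = eps / 8 by field; lra.
  by [].
set lam := eps / (16 * mu * r ^+ 2).
have lam0 : 0 < lam by apply: divr_gt0; [lra|apply: mulr_gt0; lra].
have mulam : mu * lam * r ^+ 2 = eps / 16 by rewrite /lam; field; apply/andP; split; lra.
have [ex [ex0 exa exb]] := @ex_min2 R (r ^+ 2) (lam * eps / (16 * mu)) r2
   ltac:(apply: divr_gt0; apply: mulr_gt0; clear -lam0 eps0 mupos; lra).
have [et1 [et10 et1a et1b]] := @ex_min2 R (dl / 2) (eps / (16 * mu)) ltac:(clear -dl0; lra)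
   ltac:(apply: divr_gt0; clear -eps0 mupos; lra).
have [et [et0 eta eetb]] := @ex_min2 R et1 (r ^+ 2 / 2) et10 ltac:(clear -r2; lra).
have Hnear : \forall Q \near (z, s), [/\ u0 - eps / 16 < u Q, u Q < u0 + eps / 16,
    eucl2 (Q.1 - z) < ex, s - et < Q.2 & Q.2 < s + et].
  near=> Q; split; near: Q.
  - apply: (cvgr_gt _ (ucont _ Hzs)); rewrite -/u0; clear -eps0; lra.
  - apply: (cvgr_lt _ (ucont _ Hzs)); rewrite -/u0; clear -eps0; lra.
  - apply: (cvgr_lt _ (@cont_eucl2 R n z (z, s))); rewrite /= e0; exact: ex0.
  - apply: (cvgr_gt _ (@cont_snd R n (z, s))); rewrite /=; clear -et0; lra.
  - apply: (cvgr_lt _ (@cont_snd R n (z, s))); rewrite /=; clear -et0; lra.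
have [[z' s'] [[Q1P' uP'0] [Hu1 Hu2 Hz' Hs'1 Hs'2]]] := clz _ Hnear.
rewrite /= in Hz' Hs'1 Hs'2 Hu1 Hu2 uP'0.
have HlamE : mu * (lam^-1 * eucl2 (z' - z)) <= eps / 16.
  have h1 : eucl2 (z' - z) <= lam * eps / (16 * mu) by clear -Hz' exb; lra.
  have h2 : lam^-1 * eucl2 (z' - z) <= lam^-1 * (lam * eps / (16 * mu)).
    by apply: ler_wpM2l => //; rewrite invr_ge0; exact: ltW.
  have h3 : mu * (lam^-1 * eucl2 (z' - z)) <= mu * (lam^-1 * (lam * eps / (16 * mu))).
    by apply: ler_wpM2l => //; exact: ltW.
  rewrite (_ : mu * (lam^-1 * (lam * eps / (16 * mu))) = eps / 16) in h3; first exact: h3.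
  by field; apply/andP; split; clear -lam0 mupos; lra.
have Hsm : mu * (s - s') <= eps / 16.
  have h1 : mu * (s - s') <= mu * et by apply: ler_wpM2l; [exact: ltW|clear -Hs'1; lra].
  have h2 : mu * et <= mu * (eps / (16 * mu)) by apply: ler_wpM2l; [exact: ltW|clear -eta et1b; lra].
  rewrite (_ : mu * (eps / (16 * mu)) = eps / 16) in h2; first by clear -h1 h2; lra.
  by field; clear -mupos; lra.
have muKc : mu * Kc < c0.
  have : mu * Kc < mu0 * Kc by rewrite ltr_pM2r.
  clear -mu0K; lra.
apply: (@core R n p c0 c1 f u z s r mu eps M' u0 dl lam z' s' n0 p1 ucont fb vsub r0 eps0 mupos
  lam0 dl0 muKc Dsub HB' _ _ _ mudl mulam _ Hu1 _ HlamE _ _ Hsm).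
- move=> x t Hx /andP [h1 h2]; apply: Hd0 => //; apply/andP; split => //.
  clear -h2 dla d1a; lra.
- rewrite /M'; clear -mur; lra.
- clear -dla d1b Hs1; lra.
- by split.
- clear -Hz' exa; lra.
- clear -Hs'1 eta eetb r2; lra.
- clear -Hs'2 eta et1a; lra.
Unshelve. all: end_near.
Qed.
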